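(* Let $\lambda \ge 1.05$ and let $\mathbb{\Lambda}=\{\pm\lambda^n : n\in\mathbb{Z}\}$. The lattice $\mathbb{\Lambda}$ is nondegenerate exactly in the following three cases, and in each case the complete list of triads at unity, i.e. of pairs $(p,q)\in\mathbb{\Lambda}\times\mathbb{\Lambda}$ with $p+q=1$, is as stated: (i) $\lambda=2$; the triads at unity are $(p,q)=(2,-1),\,(-1,2),\,(1/2,1/2)$. (ii) $\lambda=\sigma$, the plastic number; the triads at unity are $(p,q)=(\sigma^3,-\sigma),\,(-\sigma,\sigma^3),\,(\sigma^2,-\sigma^{-1}),\,(-\sigma^{-1},\sigma^2),\,(\sigma^{-3},\sigma^{-2}),\,(\sigma^{-2},\sigma^{-3}),\,(\sigma^5,-\sigma^4),\,(-\sigma^4,\sigma^5),\,(\sigma,-\sigma^{-4}),\,(-\sigma^{-4},\sigma),\,(\sigma^{-5},\sigma^{-1}),\,(\sigma^{-1},\sigma^{-5})$. (iii) $\lambda$ satisfies $1=\lambda^b-\lambda^a$, where $0\le a<b$ are mutually prime integers not larger than $62$, with $(a,b)\neq(1,3)$ and $(a,b)\neq(4,5)$; the triads at unity are $(p,q)=(\lambda^b,-\lambda^a),\,(-\lambda^a,\lambda^b),\,(\lambda^{b-a},-\lambda^{-a}),\,(-\lambda^{-a},\lambda^{b-a}),\,(\lambda^{-b},\lambda^{a-b}),\,(\lambda^{a-b},\lambda^{-b})$.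
   Context: For a real $\lambda>1$, the logarithmic lattice with spacing factor $\lambda$ is $\mathbb{\Lambda}=\{\pm\lambda^n\}_{n\in\mathbb{Z}}\subset\mathbb{R}$. Three points $k,p,q\in\mathbb{\Lambda}$ form a triad if $k=p+q$; then $k$ is said to interact with $p$ and $q$. Call two nodes adjacent if they belong to a common triad; the lattice is nondegenerate if every two nodes are connected through a finite sequence of triads (i.e. the adjacency graph is connected). The plastic number $\sigma=\frac{\sqrt[3]{9+\sqrt{69}}+\sqrt[3]{9-\sqrt{69}}}{\sqrt[3]{18}}\approx 1.325$ is the unique real root of $x^3-x-1=0$ (it also satisfies $\sigma^5-\sigma^4-1=0$). *)

(* Defs.v *)
From Stdlib Require Import Reals Lra Lia ZArith Arith List Relations.
Import ListNotations.
Open Scope R_scope.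

Definition in_lattice (lam x : R) : Prop :=
  exists n : Z, x = powerRZ lam n \/ x = - powerRZ lam n.

Definition is_triad (lam k p q : R) : Prop :=
  in_lattice lam k /\ in_lattice lam p /\ in_lattice lam q /\ k = p + q.

Definition adjacent (lam x y : R) : Prop :=
  exists k p q, is_triad lam k p q /\
    (x = k \/ x = p \/ x = q) /\ (y = k \/ y = p \/ y = q).

Definition nondegenerate (lam : R) : Prop :=
  forall x y, in_lattice lam x -> in_lattice lam y ->
    clos_refl_trans R (adjacent lam) x y.

Definition triad_at_unity (lam p q : R) : Prop :=
  in_lattice lam p /\ in_lattice lam q /\ p + q = 1.

Definition plastic : R :=
  (Rpower (9 + sqrt 69) (1/3) + Rpower (9 - sqrt 69) (1/3)) / Rpower 18 (1/3).

Definition triads_plastic (s : R) : list (R * R) :=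
  [ (powerRZ s 3, - powerRZ s 1); (- powerRZ s 1, powerRZ s 3);
    (powerRZ s 2, - powerRZ s (-1)); (- powerRZ s (-1), powerRZ s 2);
    (powerRZ s (-3), powerRZ s (-2)); (powerRZ s (-2), powerRZ s (-3));
    (powerRZ s 5, - powerRZ s 4); (- powerRZ s 4, powerRZ s 5);
    (powerRZ s 1, - powerRZ s (-4)); (- powerRZ s (-4), powerRZ s 1);
    (powerRZ s (-5), powerRZ s (-1)); (powerRZ s (-1), powerRZ s (-5)) ].

Definition triads_ab (lam : R) (a b : Z) : list (R * R) :=
  [ (powerRZ lam b, - powerRZ lam a); (- powerRZ lam a, powerRZ lam b);
    (powerRZ lam (b - a), - powerRZ lam (- a)); (- powerRZ lam (- a), powerRZ lam (b - a));
    (powerRZ lam (- b), powerRZ lam (a - b)); (powerRZ lam (a - b), powerRZ lam (- b)) ].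

Definition case3_pair (a b : nat) : Prop :=
  (a < b)%nat /\ (b <= 62)%nat /\ Nat.gcd a b = 1%nat /\
  (a, b) <> (1%nat, 3%nat) /\ (a, b) <> (4%nat, 5%nat).

Definition case3 (lam : R) : Prop :=
  exists a b : nat, case3_pair a b /\ lam ^ b - lam ^ a = 1.

(* Main.v *)
Require Import Defs.
From Stdlib Require Import Reals Lra Lia ZArith Arith List Bool Relations Classical.
Import ListNotations.
Open Scope R_scope.

(* ---------- computational certificate (dyadic interval arithmetic) ---------- *)
Definition DK : Z := 16777216%Z.
Definition SS : Z := 281474976710656%Z.
Fixpoint powL (N : Z) (n : nat) : Z :=
  match n with O => SS | S m => Z.shiftr (Z.mul (powL N m) N) 24 end.
Fixpoint powH (N : Z) (n : nat) : Z :=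
  match n with O => SS | S m => Z.add (Z.shiftr (Z.mul (powH N m) N) 24) 1 end.
Definition fneg (N : Z) (s t : nat) : bool :=
  Z.ltb (Z.sub (Z.sub (powH N t) (powL N s)) SS) 0.
Definition fpos (N : Z) (s t : nat) : bool :=
  Z.ltb 0 (Z.sub (Z.sub (powL N t) (powH N s)) SS).
Definition Nc : Z := 17616076%Z.
Definition isPl (s t : nat) : bool :=
  orb (andb (Nat.eqb s 1) (Nat.eqb t 3)) (andb (Nat.eqb s 4) (Nat.eqb t 5)).
Definition Cb (s t s' t' : nat) : bool :=
  andb (Nat.eqb (Nat.gcd s t) (Nat.gcd s' t'))
   (orb (negb (Nat.eqb (Nat.gcd s t) 1))
     (orb (andb (Nat.eqb s s') (Nat.eqb t t')) (andb (isPl s t) (isPl s' t')))).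
Definition thr : list nat := [0%nat; 0%nat; 0%nat; 0%nat; 0%nat; 0%nat; 0%nat; 0%nat; 0%nat; 0%nat; 0%nat; 0%nat; 0%nat; 0%nat; 2%nat; 4%nat; 6%nat; 7%nat; 9%nat; 11%nat; 12%nat; 14%nat; 15%nat; 17%nat; 18%nat; 20%nat; 21%nat; 22%nat; 24%nat; 25%nat; 26%nat; 28%nat; 29%nat; 30%nat; 31%nat; 33%nat; 34%nat; 35%nat; 36%nat; 37%nat; 39%nat; 40%nat; 41%nat; 42%nat; 43%nat; 44%nat; 45%nat; 46%nat; 48%nat; 49%nat; 50%nat; 51%nat; 52%nat; 53%nat; 54%nat; 55%nat; 56%nat; 57%nat; 58%nat; 59%nat; 60%nat; 61%nat].
Definition ents : list (Z * Z * list (nat * nat)) := [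
(17616329%Z, 17616333%Z, [(7%nat,18%nat)]);
(17618062%Z, 17618066%Z, [(22%nat,28%nat)]);
(17619372%Z, 17619376%Z, [(15%nat,23%nat)]);
(17620274%Z, 17620278%Z, [(61%nat,62%nat)]);
(17620776%Z, 17620780%Z, [(12%nat,21%nat)]);
(17622469%Z, 17622473%Z, [(26%nat,31%nat)]);
(17623413%Z, 17623417%Z, [(31%nat,35%nat)]);
(17624645%Z, 17624649%Z, [(18%nat,25%nat)]);
(17624844%Z, 17624848%Z, [(46%nat,48%nat)]);
(17628589%Z, 17628593%Z, [(9%nat,19%nat)]);
(17628735%Z, 17628739%Z, [(37%nat,40%nat)]);
(17628770%Z, 17628774%Z, [(0%nat,14%nat)]);
(17630318%Z, 17630322%Z, [(2%nat,15%nat)]);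
(17630973%Z, 17630977%Z, [(60%nat,61%nat)]);
(17635022%Z, 17635026%Z, [(4%nat,16%nat)]);
(17637491%Z, 17637495%Z, [(21%nat,27%nat)]);
(17637980%Z, 17637984%Z, [(45%nat,47%nat)]);
(17640035%Z, 17640039%Z, [(30%nat,34%nat)]);
(17640624%Z, 17640628%Z, [(25%nat,30%nat)]);
(17641847%Z, 17641851%Z, [(14%nat,22%nat)]);
(17641981%Z, 17641985%Z, [(59%nat,60%nat)]);
(17643070%Z, 17643074%Z, [(6%nat,17%nat)]);
(17643904%Z, 17643908%Z, [(36%nat,39%nat)]);
(17644843%Z, 17644847%Z, [(11%nat,20%nat)]);
(17645969%Z, 17645973%Z, [(17%nat,24%nat)]);
(17651593%Z, 17651597%Z, [(44%nat,46%nat)]);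
(17653312%Z, 17653316%Z, [(58%nat,59%nat)]);
(17654796%Z, 17654800%Z, [(8%nat,18%nat)]);
(17657453%Z, 17657457%Z, [(29%nat,33%nat)]);
(17658052%Z, 17658056%Z, [(20%nat,26%nat)]);
(17659719%Z, 17659723%Z, [(35%nat,38%nat)]);
(17659746%Z, 17659750%Z, [(24%nat,29%nat)]);
(17661557%Z, 17661561%Z, [(1%nat,14%nat)]);
(17664982%Z, 17664986%Z, [(57%nat,58%nat)]);
(17665035%Z, 17665039%Z, [(3%nat,15%nat)]);
(17665711%Z, 17665715%Z, [(43%nat,45%nat)]);
(17665885%Z, 17665889%Z, [(13%nat,21%nat)]);
(17668671%Z, 17668675%Z, [(16%nat,23%nat)]);
(17670730%Z, 17670734%Z, [(10%nat,19%nat)]);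
(17672139%Z, 17672143%Z, [(5%nat,16%nat)]);
(17675730%Z, 17675734%Z, [(28%nat,32%nat)]);
(17676226%Z, 17676230%Z, [(34%nat,37%nat)]);
(17677007%Z, 17677011%Z, [(56%nat,57%nat)]);
(17679856%Z, 17679860%Z, [(19%nat,25%nat)]);
(17679921%Z, 17679925%Z, [(23%nat,28%nat)]);
(17680363%Z, 17680367%Z, [(42%nat,44%nat)]);
(17683178%Z, 17683182%Z, [(7%nat,17%nat)]);
(17689405%Z, 17689409%Z, [(55%nat,56%nat)]);
(17691672%Z, 17691676%Z, [(12%nat,20%nat)]);
(17692901%Z, 17692905%Z, [(15%nat,22%nat)]);
(17693474%Z, 17693478%Z, [(33%nat,36%nat)]);
(17694935%Z, 17694939%Z, [(27%nat,31%nat)]);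
(17695583%Z, 17695587%Z, [(41%nat,43%nat)]);
(17696037%Z, 17696041%Z, [(0%nat,13%nat)]);
(17697979%Z, 17697983%Z, [(2%nat,14%nat)]);
(17698673%Z, 17698677%Z, [(9%nat,18%nat)]);
(17701246%Z, 17701250%Z, [(22%nat,27%nat)]);
(17702192%Z, 17702196%Z, [(54%nat,55%nat)]);
(17703030%Z, 17703034%Z, [(18%nat,24%nat)]);
(17703893%Z, 17703897%Z, [(4%nat,15%nat)]);
(17711407%Z, 17711411%Z, [(40%nat,42%nat)]);
(17711518%Z, 17711522%Z, [(32%nat,35%nat)]);
(17714052%Z, 17714056%Z, [(6%nat,16%nat)]);
(17715148%Z, 17715152%Z, [(26%nat,30%nat)]);
(17715390%Z, 17715394%Z, [(53%nat,54%nat)]);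
(17718834%Z, 17718838%Z, [(14%nat,21%nat)]);
(17719428%Z, 17719432%Z, [(11%nat,19%nat)]);
(17723831%Z, 17723835%Z, [(21%nat,26%nat)]);
(17727718%Z, 17727722%Z, [(17%nat,23%nat)]);
(17727872%Z, 17727876%Z, [(39%nat,41%nat)]);
(17728957%Z, 17728961%Z, [(8%nat,17%nat)]);
(17729019%Z, 17729023%Z, [(52%nat,53%nat)]);
(17730417%Z, 17730421%Z, [(31%nat,34%nat)]);
(17734364%Z, 17734368%Z, [(1%nat,13%nat)]);
(17736454%Z, 17736458%Z, [(25%nat,29%nat)]);
(17738771%Z, 17738775%Z, [(3%nat,14%nat)]);
(17743102%Z, 17743106%Z, [(51%nat,52%nat)]);
(17745020%Z, 17745024%Z, [(38%nat,40%nat)]);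
(17746675%Z, 17746679%Z, [(13%nat,20%nat)]);
(17747801%Z, 17747805%Z, [(5%nat,15%nat); (20%nat,25%nat)]);
(17749410%Z, 17749414%Z, [(10%nat,18%nat)]);
(17750239%Z, 17750243%Z, [(30%nat,33%nat)]);
(17754090%Z, 17754094%Z, [(16%nat,22%nat)]);
(17757662%Z, 17757666%Z, [(50%nat,51%nat)]);
(17758953%Z, 17758957%Z, [(24%nat,28%nat)]);
(17761922%Z, 17761926%Z, [(7%nat,16%nat)]);
(17762899%Z, 17762903%Z, [(37%nat,39%nat)]);
(17771057%Z, 17771061%Z, [(29%nat,32%nat)]);
(17772725%Z, 17772729%Z, [(49%nat,50%nat)]);
(17773297%Z, 17773301%Z, [(19%nat,24%nat)]);
(17774840%Z, 17774844%Z, [(0%nat,12%nat)]);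
(17776665%Z, 17776669%Z, [(12%nat,19%nat)]);
(17777321%Z, 17777325%Z, [(2%nat,13%nat)]);
(17781559%Z, 17781563%Z, [(36%nat,38%nat)]);
(17781929%Z, 17781933%Z, [(9%nat,17%nat)]);
(17782338%Z, 17782342%Z, [(15%nat,21%nat)]);
(17782756%Z, 17782760%Z, [(23%nat,27%nat)]);
(17784899%Z, 17784903%Z, [(4%nat,14%nat)]);
(17788320%Z, 17788324%Z, [(48%nat,49%nat)]);
(17792953%Z, 17792957%Z, [(28%nat,31%nat)]);
(17797987%Z, 17797991%Z, [(6%nat,15%nat)]);
(17800484%Z, 17800488%Z, [(18%nat,23%nat)]);
(17801054%Z, 17801058%Z, [(35%nat,37%nat)]);
(17804476%Z, 17804480%Z, [(47%nat,48%nat)]);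
(17807988%Z, 17807992%Z, [(22%nat,26%nat)]);
(17809088%Z, 17809092%Z, [(11%nat,18%nat)]);
(17812691%Z, 17812695%Z, [(14%nat,20%nat)]);
(17816019%Z, 17816023%Z, [(27%nat,30%nat)]);
(17817358%Z, 17817362%Z, [(8%nat,16%nat)]);
(17820240%Z, 17820244%Z, [(1%nat,12%nat)]);
(17821226%Z, 17821230%Z, [(46%nat,47%nat)]);
(17821445%Z, 17821449%Z, [(34%nat,36%nat)]);
(17825937%Z, 17825941%Z, [(3%nat,13%nat)]);
(17829550%Z, 17829554%Z, [(17%nat,22%nat)]);
(17834792%Z, 17834796%Z, [(21%nat,25%nat)]);
(17837664%Z, 17837668%Z, [(5%nat,14%nat)]);
(17838604%Z, 17838608%Z, [(45%nat,46%nat)]);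
(17840358%Z, 17840362%Z, [(26%nat,29%nat)]);
(17842800%Z, 17842804%Z, [(33%nat,35%nat)]);
(17844286%Z, 17844290%Z, [(10%nat,17%nat)]);
(17845415%Z, 17845419%Z, [(13%nat,19%nat)]);
(17856152%Z, 17856156%Z, [(7%nat,15%nat)]);
(17856648%Z, 17856652%Z, [(44%nat,45%nat)]);
(17860715%Z, 17860719%Z, [(16%nat,21%nat)]);
(17863331%Z, 17863335%Z, [(20%nat,24%nat)]);
(17865193%Z, 17865197%Z, [(32%nat,34%nat)]);
(17866087%Z, 17866091%Z, [(25%nat,28%nat)]);
(17868423%Z, 17868427%Z, [(0%nat,11%nat)]);
(17871665%Z, 17871669%Z, [(2%nat,12%nat)]);
(17875400%Z, 17875404%Z, [(43%nat,44%nat)]);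
(17880830%Z, 17880834%Z, [(12%nat,18%nat)]);
(17881596%Z, 17881600%Z, [(4%nat,13%nat)]);
(17882670%Z, 17882674%Z, [(9%nat,16%nat)]);
(17888706%Z, 17888710%Z, [(31%nat,33%nat)]);
(17893336%Z, 17893340%Z, [(24%nat,27%nat)]);
(17893795%Z, 17893799%Z, [(19%nat,23%nat)]);
(17894235%Z, 17894239%Z, [(15%nat,20%nat)]);
(17894903%Z, 17894907%Z, [(42%nat,43%nat)]);
(17898873%Z, 17898877%Z, [(6%nat,14%nat)]);
(17913430%Z, 17913434%Z, [(30%nat,32%nat)]);
(17915207%Z, 17915211%Z, [(41%nat,42%nat)]);
(17919315%Z, 17919319%Z, [(11%nat,17%nat)]);
(17922255%Z, 17922259%Z, [(23%nat,26%nat)]);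
(17923051%Z, 17923055%Z, [(1%nat,11%nat)]);
(17924742%Z, 17924746%Z, [(8%nat,15%nat)]);
(17926401%Z, 17926405%Z, [(18%nat,22%nat)]);
(17930415%Z, 17930419%Z, [(14%nat,19%nat)]);
(17930596%Z, 17930600%Z, [(3%nat,12%nat)]);
(17936363%Z, 17936367%Z, [(40%nat,41%nat)]);
(17939467%Z, 17939471%Z, [(29%nat,31%nat)]);
(17946224%Z, 17946228%Z, [(5%nat,13%nat)]);
(17953013%Z, 17953017%Z, [(22%nat,25%nat)]);
(17958429%Z, 17958433%Z, [(39%nat,40%nat)]);
(17961330%Z, 17961334%Z, [(10%nat,16%nat)]);
(17961403%Z, 17961407%Z, [(17%nat,21%nat)]);
(17966932%Z, 17966936%Z, [(28%nat,30%nat)]);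
(17969613%Z, 17969617%Z, [(13%nat,18%nat)]);
(17971124%Z, 17971128%Z, [(7%nat,14%nat)]);
(17981373%Z, 17981377%Z, [(0%nat,10%nat)]);
(17981469%Z, 17981473%Z, [(38%nat,39%nat)]);
(17985720%Z, 17985724%Z, [(2%nat,11%nat)]);
(17985804%Z, 17985808%Z, [(21%nat,24%nat)]);
(17995953%Z, 17995957%Z, [(27%nat,29%nat)]);
(17999097%Z, 17999101%Z, [(4%nat,12%nat); (16%nat,20%nat)]);
(18005551%Z, 18005555%Z, [(37%nat,38%nat)]);
(18007437%Z, 18007441%Z, [(9%nat,15%nat)]);
(18012262%Z, 18012266%Z, [(12%nat,17%nat)]);
(18020852%Z, 18020856%Z, [(20%nat,23%nat)]);
(18022593%Z, 18022597%Z, [(6%nat,13%nat)]);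
(18026674%Z, 18026678%Z, [(26%nat,28%nat)]);
(18030751%Z, 18030755%Z, [(36%nat,37%nat)]);
(18039834%Z, 18039838%Z, [(15%nat,19%nat)]);
(18048358%Z, 18048362%Z, [(1%nat,10%nat)]);
(18057154%Z, 18057158%Z, [(35%nat,36%nat)]);
(18058331%Z, 18058335%Z, [(8%nat,14%nat)]);
(18058418%Z, 18058422%Z, [(19%nat,22%nat)]);
(18058650%Z, 18058654%Z, [(3%nat,11%nat)]);
(18058883%Z, 18058887%Z, [(11%nat,16%nat)]);
(18059260%Z, 18059264%Z, [(25%nat,27%nat)]);
(18080139%Z, 18080143%Z, [(5%nat,12%nat)]);
(18084032%Z, 18084036%Z, [(14%nat,18%nat)]);
(18084851%Z, 18084855%Z, [(34%nat,35%nat)]);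
(18093896%Z, 18093900%Z, [(24%nat,26%nat)]);
(18098804%Z, 18098808%Z, [(18%nat,21%nat)]);
(18110117%Z, 18110121%Z, [(10%nat,15%nat)]);
(18113946%Z, 18113950%Z, [(33%nat,34%nat)]);
(18114885%Z, 18114889%Z, [(7%nat,13%nat)]);
(18120394%Z, 18120398%Z, [(0%nat,9%nat)]);
(18126412%Z, 18126416%Z, [(2%nat,10%nat)]);
(18130795%Z, 18130799%Z, [(23%nat,25%nat)]);
(18132193%Z, 18132197%Z, [(13%nat,17%nat)]);
(18142365%Z, 18142369%Z, [(17%nat,20%nat)]);
(18144552%Z, 18144556%Z, [(32%nat,33%nat)]);
(18145046%Z, 18145050%Z, [(4%nat,11%nat)]);
(18166755%Z, 18166759%Z, [(9%nat,14%nat)]);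
(18170202%Z, 18170206%Z, [(22%nat,24%nat)]);
(18176796%Z, 18176800%Z, [(31%nat,32%nat)]);
(18178211%Z, 18178215%Z, [(6%nat,12%nat)]);
(18184923%Z, 18184927%Z, [(12%nat,16%nat)]);
(18189522%Z, 18189526%Z, [(16%nat,19%nat)]);
(18204456%Z, 18204460%Z, [(1%nat,9%nat)]);
(18210821%Z, 18210825%Z, [(30%nat,31%nat)]);
(18212399%Z, 18212403%Z, [(21%nat,23%nat)]);
(18219013%Z, 18219017%Z, [(3%nat,10%nat)]);
(18229796%Z, 18229800%Z, [(8%nat,13%nat)]);
(18240777%Z, 18240781%Z, [(15%nat,18%nat)]);
(18242970%Z, 18242974%Z, [(11%nat,15%nat)]);
(18246786%Z, 18246790%Z, [(29%nat,30%nat)]);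
(18249754%Z, 18249758%Z, [(5%nat,11%nat)]);
(18257713%Z, 18257717%Z, [(20%nat,22%nat)]);
(18284871%Z, 18284875%Z, [(28%nat,29%nat)]);
(18295682%Z, 18295686%Z, [(0%nat,8%nat)]);
(18296733%Z, 18296737%Z, [(14%nat,17%nat)]);
(18300512%Z, 18300516%Z, [(7%nat,12%nat)]);
(18304352%Z, 18304356%Z, [(2%nat,9%nat)]);
(18306529%Z, 18306533%Z, [(19%nat,21%nat)]);
(18307260%Z, 18307264%Z, [(10%nat,14%nat)]);
(18325280%Z, 18325284%Z, [(27%nat,28%nat)]);
(18331432%Z, 18331436%Z, [(4%nat,10%nat)]);
(18358125%Z, 18358129%Z, [(13%nat,16%nat)]);
(18359298%Z, 18359302%Z, [(18%nat,20%nat)]);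
(18368243%Z, 18368247%Z, [(26%nat,27%nat)]);
(18378962%Z, 18378966%Z, [(9%nat,13%nat)]);
(18380561%Z, 18380565%Z, [(6%nat,11%nat)]);
(18404295%Z, 18404299%Z, [(1%nat,8%nat)]);
(18414025%Z, 18414029%Z, [(25%nat,26%nat)]);
(18416555%Z, 18416559%Z, [(17%nat,19%nat)]);
(18425856%Z, 18425860%Z, [(3%nat,9%nat); (12%nat,15%nat)]);
(18459571%Z, 18459575%Z, [(8%nat,12%nat)]);
(18462927%Z, 18462931%Z, [(24%nat,25%nat)]);
(18472148%Z, 18472152%Z, [(5%nat,10%nat)]);
(18478940%Z, 18478944%Z, [(16%nat,18%nat)]);
(18501052%Z, 18501056%Z, [(11%nat,14%nat)]);
(18515298%Z, 18515302%Z, [(23%nat,24%nat)]);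
(18523547%Z, 18523551%Z, [(0%nat,7%nat)]);
(18536689%Z, 18536693%Z, [(2%nat,8%nat)]);
(18547229%Z, 18547233%Z, [(15%nat,17%nat)]);
(18551039%Z, 18551043%Z, [(7%nat,11%nat)]);
(18571542%Z, 18571546%Z, [(22%nat,23%nat)]);
(18578282%Z, 18578286%Z, [(4%nat,9%nat)]);
(18585135%Z, 18585139%Z, [(10%nat,13%nat)]);
(18622365%Z, 18622369%Z, [(14%nat,16%nat)]);
(18632130%Z, 18632134%Z, [(21%nat,22%nat)]);
(18655974%Z, 18655978%Z, [(6%nat,10%nat)]);
(18669277%Z, 18669281%Z, [(1%nat,7%nat)]);
(18679934%Z, 18679938%Z, [(9%nat,12%nat)]);
(18697617%Z, 18697621%Z, [(20%nat,21%nat)]);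
(18703202%Z, 18703206%Z, [(3%nat,8%nat)]);
(18705516%Z, 18705520%Z, [(13%nat,15%nat)]);
(18768655%Z, 18768659%Z, [(19%nat,20%nat)]);
(18777942%Z, 18777946%Z, [(5%nat,9%nat)]);
(18787844%Z, 18787848%Z, [(8%nat,11%nat)]);
(18798140%Z, 18798144%Z, [(12%nat,14%nat)]);
(18831787%Z, 18831791%Z, [(0%nat,6%nat)]);
(18846027%Z, 18846031%Z, [(18%nat,19%nat)]);
(18853107%Z, 18853111%Z, [(2%nat,7%nat)]);
(18902091%Z, 18902095%Z, [(11%nat,13%nat)]);
(18912075%Z, 18912079%Z, [(7%nat,10%nat)]);
(18921988%Z, 18921992%Z, [(4%nat,8%nat)]);
(18930670%Z, 18930674%Z, [(17%nat,18%nat)]);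
(19019761%Z, 19019765%Z, [(10%nat,12%nat)]);
(19023726%Z, 19023730%Z, [(16%nat,17%nat)]);
(19037510%Z, 19037514%Z, [(1%nat,6%nat)]);
(19057043%Z, 19057047%Z, [(6%nat,9%nat)]);
(19095521%Z, 19095525%Z, [(3%nat,7%nat)]);
(19126594%Z, 19126598%Z, [(15%nat,16%nat)]);
(19154304%Z, 19154308%Z, [(9%nat,11%nat)]);
(19229019%Z, 19229023%Z, [(5%nat,8%nat)]);
(19241016%Z, 19241020%Z, [(14%nat,15%nat)]);
(19271959%Z, 19271963%Z, [(0%nat,5%nat)]);
(19309969%Z, 19309973%Z, [(2%nat,6%nat); (8%nat,10%nat)]);
(19369186%Z, 19369190%Z, [(13%nat,14%nat)]);
(19437274%Z, 19437278%Z, [(4%nat,7%nat)]);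
(19492641%Z, 19492645%Z, [(7%nat,9%nat)]);
(19513910%Z, 19513914%Z, [(12%nat,13%nat)]);
(19584109%Z, 19584113%Z, [(1%nat,5%nat)]);
(19678847%Z, 19678851%Z, [(11%nat,12%nat)]);
(19696198%Z, 19696202%Z, [(3%nat,6%nat)]);
(19710747%Z, 19710751%Z, [(6%nat,8%nat)]);
(19868858%Z, 19868862%Z, [(10%nat,11%nat)]);
(19951583%Z, 19951587%Z, [(0%nat,4%nat)]);
(19976843%Z, 19976847%Z, [(5%nat,7%nat)]);
(20029631%Z, 20029635%Z, [(2%nat,5%nat)]);
(20090571%Z, 20090575%Z, [(9%nat,10%nat)]);
(20310627%Z, 20310631%Z, [(4%nat,6%nat)]);
(20353273%Z, 20353277%Z, [(8%nat,9%nat)]);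
(20480686%Z, 20480690%Z, [(1%nat,4%nat)]);
(20670445%Z, 20670449%Z, [(7%nat,8%nat)]);
(20745122%Z, 20745126%Z, [(3%nat,5%nat)]);
(21062499%Z, 21062503%Z, [(6%nat,7%nat)]);
(21137966%Z, 21137970%Z, [(0%nat,3%nat)]);
(21340947%Z, 21340951%Z, [(2%nat,4%nat)]);
(21562060%Z, 21562064%Z, [(5%nat,6%nat)]);
(22225078%Z, 22225082%Z, [(1%nat,3%nat); (4%nat,5%nat)]);
(23157213%Z, 23157217%Z, [(3%nat,4%nat)]);
(23726565%Z, 23726569%Z, [(0%nat,2%nat)]);
(24588204%Z, 24588208%Z, [(2%nat,3%nat)]);
(27146104%Z, 27146108%Z, [(1%nat,2%nat)]);
(33554431%Z, 33554435%Z, [(0%nat,1%nat)])].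

Fixpoint chain (b : Z) (l : list (Z * Z * list (nat * nat))) : bool :=
  match l with
  | [] => true
  | (lo, hi, _) :: r => if Z.leb b lo then if Z.ltb lo hi then chain hi r else false else false
  end.
Definition pair_ok (lo hi : Z) (p : nat * nat) : bool :=
  let '(s, t) := p in
  if Nat.ltb s t then if fneg lo s t then fpos hi s t else false else false.
Definition ent_ok (e : Z * Z * list (nat * nat)) : bool :=
  let '(lo, hi, ps) := e in
  if forallb (pair_ok lo hi) ps then
    forallb (fun p => forallb (fun q => Cb (fst p) (snd p) (fst q) (snd q)) ps) ps
  else false.
Definition inents (s t : nat) : bool :=
  existsb (fun e => let '(_, _, ps) := e in
    existsb (fun p => andb (Nat.eqb (fst p) s) (Nat.eqb (snd p) t)) ps) ents.
Definition thr_ok (t : nat) : bool :=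
  let s0 := nth (t - 1) thr 0%nat in
  if (if Nat.eqb s0 0 then true else fpos Nc (s0 - 1) t) then
    if Nat.leb s0 t then forallb (fun s => inents s t) (seq s0 (t - s0)) else false
  else false.

Lemma chain_true : chain DK ents = true.
Proof. vm_compute. reflexivity. Qed.
Lemma ents_true : forallb ent_ok ents = true.
Proof. vm_compute. reflexivity. Qed.
Lemma thr_true : forallb thr_ok (seq 1 62) = true.
Proof. vm_compute. reflexivity. Qed.


Lemma pow_lt_strict (x y : R) (n : nat) : 0 <= x < y -> (0 < n)%nat -> x ^ n < y ^ n.
Proof.
  intros [Hx Hxy] Hn. induction n as [|n IH]; [lia|].
  destruct n as [|n]; [simpl; lra|].
  assert (H1 : x ^ S n < y ^ S n) by (apply IH; lia).
  assert (H2 : 0 <= x ^ S n) by (apply pow_le; lra).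
  change (x * x ^ S n < y * y ^ S n). nra.
Qed.

Definition fr (s t : nat) (x : R) := x ^ t - x ^ s - 1.

Lemma mono (s t : nat) (x y : R) : (s < t)%nat -> 1 <= x -> x < y -> fr s t x < fr s t y.
Proof.
  intros Hst Hx Hxy. unfold fr.
  assert (exists k, t = (s + k)%nat /\ (0 < k)%nat) as [k [-> Hk]] by (exists (t - s)%nat; lia).
  rewrite !pow_add.
  assert (A1 : x ^ s <= y ^ s) by (apply pow_incr; lra).
  assert (A2 : x ^ k < y ^ k) by (apply pow_lt_strict; [lra|lia]).
  assert (A3 : 1 <= x ^ k) by (apply pow_R1_Rle; lra).
  assert (A4 : 1 <= y ^ s) by (apply pow_R1_Rle; lra).
  assert (B1 : x ^ s * (x ^ k - 1) <= y ^ s * (x ^ k - 1)) by (apply Rmult_le_compat_r; lra).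
  assert (B2 : y ^ s * (x ^ k - 1) < y ^ s * (y ^ k - 1)) by (apply Rmult_lt_compat_l; lra).
  lra.
Qed.

Lemma mono_le (s t : nat) (x y : R) : (s < t)%nat -> 1 <= x -> x <= y -> fr s t x <= fr s t y.
Proof.
  intros. destruct (Req_dec x y) as [->|]; [lra|]. left; apply mono; [assumption|lra|lra].
Qed.


Lemma DK_pos : (0 < DK)%Z. Proof. unfold DK; lia. Qed.
Lemma DK_R : IZR DK = 2 ^ 24.
Proof. unfold DK. rewrite (pow_IZR 2 24). reflexivity. Qed.

Lemma shiftr_le (a : Z) : IZR (Z.shiftr a 24) <= IZR a / IZR DK.
Proof.
  rewrite Z.shiftr_div_pow2 by lia.
  assert (HD : (0 < 2 ^ 24)%Z) by lia.
  pose proof (Z.mul_div_le a (2 ^ 24) HD) as H.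
  apply IZR_le in H. rewrite mult_IZR in H.
  assert (E : IZR (2 ^ 24) = IZR DK) by reflexivity. rewrite E in H.
  assert (0 < IZR DK) by (apply IZR_lt, DK_pos).
  apply Rmult_le_reg_l with (IZR DK); [lra|].
  unfold Rdiv. rewrite <- Rmult_assoc, (Rmult_comm (IZR DK) (IZR a)), Rmult_assoc, Rinv_r by lra. lra.
Qed.

Lemma shiftr_gt (a : Z) : IZR a / IZR DK < IZR (Z.shiftr a 24 + 1).
Proof.
  rewrite Z.shiftr_div_pow2 by lia.
  assert (HD : (0 < 2 ^ 24)%Z) by lia.
  pose proof (Z.mul_succ_div_gt a (2 ^ 24) HD) as H.
  rewrite <- Z.add_1_r in H.
  apply IZR_lt in H. rewrite mult_IZR in H.
  assert (E : IZR (2 ^ 24) = IZR DK) by reflexivity. rewrite E in H.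
  assert (0 < IZR DK) by (apply IZR_lt, DK_pos).
  apply Rmult_lt_reg_l with (IZR DK); [lra|].
  unfold Rdiv. rewrite <- Rmult_assoc, (Rmult_comm (IZR DK) (IZR a)), Rmult_assoc, Rinv_r by lra. lra.
Qed.

Lemma powL_le (N : Z) (n : nat) : (0 <= N)%Z ->
  IZR (powL N n) <= IZR SS * (IZR N / IZR DK) ^ n.
Proof.
  intros HN. assert (0 < IZR DK) by (apply IZR_lt, DK_pos).
  assert (Hx : 0 <= IZR N / IZR DK) by (unfold Rdiv; apply Rmult_le_pos; [apply IZR_le; exact HN|left; apply Rinv_0_lt_compat; lra]).
  induction n as [|n IH].
  - cbn [powL powH pow]. lra.
  - change (powL N (S n)) with (Z.shiftr (Z.mul (powL N n) N) 24). eapply Rle_trans; [apply shiftr_le|].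
    rewrite mult_IZR. simpl pow.
    replace (IZR (powL N n) * IZR N / IZR DK) with (IZR (powL N n) * (IZR N / IZR DK)) by (unfold Rdiv; ring).
    replace (IZR SS * (IZR N / IZR DK * (IZR N / IZR DK) ^ n))
      with (IZR SS * (IZR N / IZR DK) ^ n * (IZR N / IZR DK)) by ring.
    apply Rmult_le_compat_r; assumption.
Qed.

Lemma powH_ge (N : Z) (n : nat) : (0 <= N)%Z ->
  IZR SS * (IZR N / IZR DK) ^ n <= IZR (powH N n).
Proof.
  intros HN. assert (0 < IZR DK) by (apply IZR_lt, DK_pos).
  assert (Hx : 0 <= IZR N / IZR DK) by (unfold Rdiv; apply Rmult_le_pos; [apply IZR_le; exact HN|left; apply Rinv_0_lt_compat; lra]).
  induction n as [|n IH].
  - cbn [powL powH pow]. lra.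
  - change (powH N (S n)) with (Z.add (Z.shiftr (Z.mul (powH N n) N) 24) 1). left. eapply Rle_lt_trans; [|apply shiftr_gt].
    rewrite mult_IZR. simpl pow.
    replace (IZR (powH N n) * IZR N / IZR DK) with (IZR (powH N n) * (IZR N / IZR DK)) by (unfold Rdiv; ring).
    replace (IZR SS * (IZR N / IZR DK * (IZR N / IZR DK) ^ n))
      with (IZR SS * (IZR N / IZR DK) ^ n * (IZR N / IZR DK)) by ring.
    apply Rmult_le_compat_r; assumption.
Qed.

Lemma SS_pos : 0 < IZR SS.
Proof. apply IZR_lt. unfold SS. lia. Qed.

Lemma fneg_ok (N : Z) (s t : nat) : (0 <= N)%Z -> fneg N s t = true ->
  fr s t (IZR N / IZR DK) < 0.
Proof.
  intros HN H. unfold fneg in H. apply Z.ltb_lt, IZR_lt in H.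
  rewrite !minus_IZR in H.
  pose proof (powH_ge N t HN). pose proof (powL_le N s HN). pose proof SS_pos.
  unfold fr. apply Rmult_lt_reg_l with (IZR SS); [lra|]. nra.
Qed.

Lemma fpos_ok (N : Z) (s t : nat) : (0 <= N)%Z -> fpos N s t = true ->
  0 < fr s t (IZR N / IZR DK).
Proof.
  intros HN H. unfold fpos in H. apply Z.ltb_lt, IZR_lt in H.
  rewrite !minus_IZR in H.
  pose proof (powL_le N t HN). pose proof (powH_ge N s HN). pose proof SS_pos.
  unfold fr. apply Rmult_lt_reg_l with (IZR SS); [lra|]. nra.
Qed.

Lemma mono_s (s s' t : nat) (x : R) : 1 <= x -> (s <= s')%nat -> fr s' t x <= fr s t x.
Proof. intros Hx H. unfold fr. pose proof (Rle_pow x s s' Hx H). lra. Qed.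

Lemma root_gt (s t : nat) (l y : R) : (s < t)%nat -> 1 <= l -> 1 <= y ->
  fr s t l = 0 -> fr s t y < 0 -> y < l.
Proof.
  intros. destruct (Rlt_le_dec y l); auto. exfalso.
  pose proof (mono_le s t l y H H0 r). lra.
Qed.

Lemma root_lt (s t : nat) (l y : R) : (s < t)%nat -> 1 <= l -> 1 <= y ->
  fr s t l = 0 -> 0 < fr s t y -> l < y.
Proof.
  intros. destruct (Rlt_le_dec l y); auto. exfalso.
  pose proof (mono_le s t y l H H1 r). lra.
Qed.

Lemma IZR_div_ge1 (z : Z) : (DK <= z)%Z -> 1 <= IZR z / IZR DK.
Proof.
  intros H. assert (HD : 0 < IZR DK) by (apply IZR_lt, DK_pos).
  apply Rmult_le_reg_r with (IZR DK); [lra|].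
  unfold Rdiv; rewrite Rmult_assoc, Rinv_l, Rmult_1_r, Rmult_1_l by lra.
  apply IZR_le; exact H.
Qed.

Lemma chain_lo (b : Z) (l : list (Z * Z * list (nat * nat))) : chain b l = true ->
  forall lo hi ps, In (lo, hi, ps) l -> (b <= lo)%Z /\ (lo < hi)%Z.
Proof.
  revert b. induction l as [|[[lo0 hi0] ps0] r IH]; intros b H lo hi ps Hin; [destruct Hin|].
  simpl in H.
  destruct (Z.leb b lo0) eqn:E1; [|discriminate].
  destruct (Z.ltb lo0 hi0) eqn:E2; [|discriminate].
  apply Z.leb_le in E1. apply Z.ltb_lt in E2.
  destruct Hin as [Hin|Hin].
  - inversion Hin; subst. lia.
  - destruct (IH hi0 H lo hi ps Hin). lia.
Qed.

Lemma chain_uniq (b : Z) (l : list (Z * Z * list (nat * nat))) (lam : R) : chain b l = true ->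
  forall e1 e2, In e1 l -> In e2 l ->
  (let '(lo, hi, _) := e1 in IZR lo / IZR DK < lam < IZR hi / IZR DK) ->
  (let '(lo, hi, _) := e2 in IZR lo / IZR DK < lam < IZR hi / IZR DK) -> e1 = e2.
Proof.
  assert (HD : 0 < IZR DK) by (apply IZR_lt, DK_pos).
  assert (Key : forall a c : Z, IZR a / IZR DK < IZR c / IZR DK -> (a < c)%Z).
  { intros a c Hac. apply lt_IZR. apply Rmult_lt_reg_r with (/ IZR DK); [apply Rinv_0_lt_compat; lra|].
    exact Hac. }
  revert b. induction l as [|[[lo0 hi0] ps0] r IH]; intros b H e1 e2 H1 H2 B1 B2; [destruct H1|].
  simpl in H.
  destruct (Z.leb b lo0) eqn:E1; [|discriminate].
  destruct (Z.ltb lo0 hi0) eqn:E2; [|discriminate].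
  destruct H1 as [H1|H1]; destruct H2 as [H2|H2].
  - subst; reflexivity.
  - subst e1. destruct e2 as [[lo2 hi2] ps2].
    destruct (chain_lo hi0 r H lo2 hi2 ps2 H2).
    assert (lo2 < hi0)%Z by (apply Key; lra). lia.
  - subst e2. destruct e1 as [[lo1 hi1] ps1].
    destruct (chain_lo hi0 r H lo1 hi1 ps1 H1).
    assert (lo1 < hi0)%Z by (apply Key; lra). lia.
  - eapply IH; eauto.
Qed.

Lemma loc (lam : R) (s t : nat) : 21/20 <= lam -> (s < t)%nat -> (t <= 62)%nat ->
  lam ^ t - lam ^ s = 1 ->
  exists lo hi ps, In (lo, hi, ps) ents /\ In (s, t) ps /\
    IZR lo / IZR DK < lam < IZR hi / IZR DK.
Proof.
  intros Hl Hst Ht Heq.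
  assert (Hf : fr s t lam = 0) by (unfold fr; lra).
  pose proof thr_true as A.
  rewrite forallb_forall in A. specialize (A t ltac:(apply in_seq; lia)).
  unfold thr_ok in A.
  set (s0 := nth (t - 1) thr 0%nat) in *.
  destruct (if Nat.eqb s0 0 then true else fpos Nc (s0 - 1) t) eqn:E0; [|discriminate].
  destruct (Nat.leb s0 t) eqn:E1; [|discriminate].
  destruct (le_lt_dec s0 s) as [Hs|Hs].
  - rewrite forallb_forall in A. specialize (A s ltac:(apply in_seq; lia)).
    unfold inents in A. apply existsb_exists in A as [[[lo hi] ps] [Hin Hps]].
    apply existsb_exists in Hps as [[s' t'] [Hp Hb]].
    apply andb_true_iff in Hb as [B1 B2]. apply Nat.eqb_eq in B1, B2. simpl in B1, B2. subst s' t'.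
    exists lo, hi, ps. split; [exact Hin|]. split; [exact Hp|].
    pose proof ents_true as En. rewrite forallb_forall in En. specialize (En _ Hin).
    unfold ent_ok in En.
    destruct (forallb (pair_ok lo hi) ps) eqn:Fp; [|discriminate].
    rewrite forallb_forall in Fp. specialize (Fp _ Hp). unfold pair_ok in Fp.
    destruct (Nat.ltb s t); [|discriminate].
    destruct (fneg lo s t) eqn:Fn; [|discriminate].
    destruct (chain_lo DK ents chain_true lo hi ps Hin) as [C1 C2].
    assert (HDl : (0 <= lo)%Z) by (unfold DK in C1; lia).
    assert (HDh : (0 <= hi)%Z) by (unfold DK in C1; lia).
    apply fneg_ok in Fn; [|exact HDl]. apply fpos_ok in Fp; [|exact HDh].
    pose proof (IZR_div_ge1 lo C1). pose proof (IZR_div_ge1 hi ltac:(lia)).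
    split.
    + apply (root_gt s t); [exact Hst|lra|lra|exact Hf|exact Fn].
    + apply (root_lt s t); [exact Hst|lra|lra|exact Hf|exact Fp].
  - exfalso.
    destruct (Nat.eqb s0 0) eqn:Ez; [apply Nat.eqb_eq in Ez; lia|].
    apply fpos_ok in E0; [|unfold Nc; lia].
    assert (Hc1 : 1 <= IZR Nc / IZR DK) by (apply IZR_div_ge1; unfold Nc, DK; lia).
    assert (Hc2 : IZR Nc / IZR DK <= 21/20) by (unfold Nc, DK; lra).
    pose proof (mono_s s (s0 - 1) t (IZR Nc / IZR DK) Hc1 ltac:(lia)).
    pose proof (mono_le s t (IZR Nc / IZR DK) lam Hst Hc1 ltac:(lra)).
    lra.
Qed.

Lemma sep (lam : R) (s t s' t' : nat) : 21/20 <= lam ->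
  (s < t)%nat -> (t <= 62)%nat -> lam ^ t - lam ^ s = 1 ->
  (s' < t')%nat -> (t' <= 62)%nat -> lam ^ t' - lam ^ s' = 1 ->
  Cb s t s' t' = true.
Proof.
  intros Hl H1 H2 H3 H4 H5 H6.
  destruct (loc lam s t Hl H1 H2 H3) as [lo [hi [ps [Hin [Hp B]]]]].
  destruct (loc lam s' t' Hl H4 H5 H6) as [lo' [hi' [ps' [Hin' [Hp' B']]]]].
  pose proof (chain_uniq DK ents lam chain_true _ _ Hin Hin' B B') as E.
  inversion E; subst lo' hi' ps'.
  pose proof ents_true as En. rewrite forallb_forall in En. specialize (En _ Hin).
  unfold ent_ok in En.
  destruct (forallb (pair_ok lo hi) ps); [|discriminate].
  rewrite forallb_forall in En. specialize (En _ Hp).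
  rewrite forallb_forall in En. specialize (En _ Hp'). exact En.
Qed.


Lemma Cb_spec s t s' t' : Cb s t s' t' = true ->
  Nat.gcd s t = Nat.gcd s' t' /\
  (Nat.gcd s t = 1%nat -> (s = s' /\ t = t') \/ (isPl s t = true /\ isPl s' t' = true)).
Proof.
  unfold Cb. intros H.
  apply andb_true_iff in H as [H1 H2]. apply Nat.eqb_eq in H1.
  split; [exact H1|]. intros Hg.
  apply orb_true_iff in H2 as [H2|H2].
  - rewrite Hg in H2. discriminate.
  - apply orb_true_iff in H2 as [H2|H2].
    + apply andb_true_iff in H2 as [A B]. apply Nat.eqb_eq in A, B. left; auto.
    + apply andb_true_iff in H2. right; exact H2.
Qed.

Lemma isPl_spec s t : isPl s t = true -> (s = 1 /\ t = 3 \/ s = 4 /\ t = 5)%nat.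
Proof.
  unfold isPl. intros H. apply orb_true_iff in H as [H|H];
  apply andb_true_iff in H as [A B]; apply Nat.eqb_eq in A, B; auto.
Qed.

Lemma big_ineq : 20 < (21/20) ^ 62.
Proof.
  assert (E : (21/20) ^ 62 * 20 ^ 62 = 21 ^ 62).
  { rewrite <- Rpow_mult_distr. f_equal. field. }
  assert (Z1 : IZR 21 ^ 62 = IZR (21 ^ Z.of_nat 62)) by apply pow_IZR.
  assert (Z2 : IZR 20 ^ 62 = IZR (20 ^ Z.of_nat 62)) by apply pow_IZR.
  assert (Z3 : (20 * 20 ^ Z.of_nat 62 < 21 ^ Z.of_nat 62)%Z) by (vm_compute; reflexivity).
  apply IZR_lt in Z3. rewrite mult_IZR in Z3.
  rewrite <- Z1, <- Z2 in Z3.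
  assert (P : 0 < IZR 20 ^ 62) by (apply pow_lt; lra).
  apply Rmult_lt_reg_r with (IZR 20 ^ 62); [exact P|].
  change (IZR 21) with 21 in *. change (IZR 20) with 20 in *. lra.
Qed.

Lemma F0 (lam : R) (s t : nat) : 21/20 <= lam -> (s < t)%nat -> lam ^ t - lam ^ s = 1 -> (t <= 62)%nat.
Proof.
  intros Hl Hst Heq. destruct (le_lt_dec t 62) as [|Ht]; [assumption|exfalso].
  assert (A1 : lam ^ s <= lam ^ (t - 1)) by (apply Rle_pow; [lra|lia]).
  assert (A2 : lam ^ t = lam * lam ^ (t - 1)).
  { replace t with (S (t - 1)) at 1 by lia. reflexivity. }
  assert (A3 : lam ^ 62 <= lam ^ (t - 1)) by (apply Rle_pow; [lra|lia]).
  assert (A4 : (21/20) ^ 62 <= lam ^ 62) by (apply pow_incr; lra).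
  pose proof big_ineq.
  assert (A5 : 0 <= lam ^ (t-1)) by (apply pow_le; lra).
  nra.
Qed.


Section PZ.
Variable lam : R.
Hypothesis hl : 1 < lam.

Lemma pz_pos n : 0 < powerRZ lam n.
Proof. apply powerRZ_lt; lra. Qed.

Lemma pz_add n m : powerRZ lam (n + m) = powerRZ lam n * powerRZ lam m.
Proof. apply powerRZ_add; lra. Qed.

Lemma pz_nat (n : nat) : powerRZ lam (Z.of_nat n) = lam ^ n.
Proof. symmetry; apply pow_powerRZ. Qed.

Lemma pz_gt1 n : (0 < n)%Z -> 1 < powerRZ lam n.
Proof.
  intros H. replace n with (Z.of_nat (Z.to_nat n)) by lia.
  rewrite pz_nat. apply Rlt_pow_R1; [lra|lia].
Qed.

Lemma pz_0 : powerRZ lam 0 = 1.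
Proof. reflexivity. Qed.

Lemma pz_lt n m : (n < m)%Z -> powerRZ lam n < powerRZ lam m.
Proof.
  intros H. replace m with (n + (m - n))%Z by ring. rewrite pz_add.
  pose proof (pz_gt1 (m - n) ltac:(lia)). pose proof (pz_pos n). nra.
Qed.

Lemma pz_inj n m : powerRZ lam n = powerRZ lam m -> n = m.
Proof.
  intros H. destruct (Z.lt_trichotomy n m) as [h|[h|h]]; auto;
  [pose proof (pz_lt _ _ h)|pose proof (pz_lt _ _ h)]; lra.
Qed.

Lemma pz_neg n : powerRZ lam (- n) * powerRZ lam n = 1.
Proof. rewrite <- pz_add. replace (- n + n)%Z with 0%Z by ring. reflexivity. Qed.

Lemma pz_ge1_inv n : 1 <= powerRZ lam n -> (0 <= n)%Z.
Proof.
  intros H. destruct (Z_lt_le_dec n 0) as [h|h]; auto.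
  pose proof (pz_lt _ _ h). rewrite pz_0 in H0. lra.
Qed.

Lemma pz_le1_inv n : powerRZ lam n <= 1 -> (n <= 0)%Z.
Proof.
  intros H. destruct (Z_lt_le_dec 0 n) as [h|h]; auto.
  pose proof (pz_lt _ _ h). rewrite pz_0 in H0. lra.
Qed.

Lemma swap_in a b p q : In (p,q) (triads_ab lam a b) -> In (q,p) (triads_ab lam a b).
Proof.
  unfold triads_ab. simpl.
  intros [H|[H|[H|[H|[H|[H|[]]]]]]]; inversion H; subst; tauto.
Qed.

Definition upair (p q : R) : Prop :=
  exists s t : nat, (s < t)%nat /\ lam ^ t - lam ^ s = 1 /\
    In (p, q) (triads_ab lam (Z.of_nat s) (Z.of_nat t)).

Lemma upair_swap p q : upair p q -> upair q p.
Proof. intros [s [t [A [B C]]]]. exists s, t. repeat split; auto. apply swap_in; auto. Qed.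

Lemma Upp i j : powerRZ lam i + powerRZ lam j = 1 -> (i <= j)%Z ->
  upair (powerRZ lam i) (powerRZ lam j).
Proof.
  intros H Hij.
  pose proof (pz_pos i). pose proof (pz_pos j).
  assert (Hi : (i < 0)%Z).
  { destruct (Z_lt_le_dec i 0); auto. pose proof (pz_ge1_inv i). 
    assert (1 <= powerRZ lam i). { destruct (Z.eq_dec i 0) as [->|]; [rewrite pz_0; lra|].
      left; apply pz_gt1; lia. } lra. }
  assert (Hj : (j < 0)%Z).
  { destruct (Z_lt_le_dec j 0); auto.
    assert (1 <= powerRZ lam j). { destruct (Z.eq_dec j 0) as [->|]; [rewrite pz_0; lra|].
      left; apply pz_gt1; lia. } lra. }
  exists (Z.to_nat (j - i)), (Z.to_nat (- i)).
  rewrite !Z2Nat.id by lia.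
  split; [lia|]. split.
  - rewrite <- !pz_nat. rewrite !Z2Nat.id by lia.
    replace (j - i)%Z with (j + - i)%Z by ring. rewrite pz_add.
    pose proof (pz_neg i).
    replace (powerRZ lam (- i) - powerRZ lam j * powerRZ lam (- i))
      with (powerRZ lam (- i) * (1 - powerRZ lam j)) by ring.
    replace (1 - powerRZ lam j) with (powerRZ lam i) by lra. exact H2.
  - unfold triads_ab. cbn [In]. do 4 right. left.
    f_equal; f_equal; ring.
Qed.

Lemma Upm i j : powerRZ lam i - powerRZ lam j = 1 -> upair (powerRZ lam i) (- powerRZ lam j).
Proof.
  intros H.
  pose proof (pz_pos i). pose proof (pz_pos j).
  assert (Hij : (j < i)%Z).
  { destruct (Z_lt_le_dec j i); auto. exfalso.
    destruct (Z.eq_dec i j) as [->|]; [lra|].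
    pose proof (pz_lt i j ltac:(lia)). lra. }
  assert (Hi : (0 < i)%Z).
  { destruct (Z_lt_le_dec 0 i); auto. exfalso.
    destruct (Z.eq_dec i 0) as [->|]; [rewrite pz_0 in H; lra|].
    pose proof (pz_lt i 0 ltac:(lia)). rewrite pz_0 in H2. lra. }
  destruct (Z_lt_le_dec j 0) as [Hj|Hj].
  - exists (Z.to_nat (- j)), (Z.to_nat (i - j)).
    rewrite !Z2Nat.id by lia.
    split; [lia|]. split.
    + rewrite <- !pz_nat. rewrite !Z2Nat.id by lia.
      replace (i - j)%Z with (i + - j)%Z by ring. rewrite pz_add.
      pose proof (pz_neg j).
      replace (powerRZ lam i * powerRZ lam (- j) - powerRZ lam (- j))
        with (powerRZ lam (- j) * (powerRZ lam i - 1)) by ring.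
      replace (powerRZ lam i - 1) with (powerRZ lam j) by lra. exact H2.
    + unfold triads_ab. cbn [In]. do 2 right. left.
      f_equal; [|f_equal]; f_equal; ring.
  - exists (Z.to_nat j), (Z.to_nat i).
    rewrite !Z2Nat.id by lia.
    split; [lia|]. split.
    + rewrite <- !pz_nat. rewrite !Z2Nat.id by lia. exact H.
    + unfold triads_ab. cbn [In]. left. reflexivity.
Qed.

Lemma U p q : in_lattice lam p -> in_lattice lam q -> p + q = 1 -> upair p q.
Proof.
  intros [i [Hp|Hp]] [j [Hq|Hq]] H; subst p q.
  - destruct (Z_le_gt_dec i j).
    + apply Upp; auto.
    + apply upair_swap. apply Upp; [lra|lia].
  - apply Upm. lra.
  - apply upair_swap. apply Upm. lra.
  - pose proof (pz_pos i). pose proof (pz_pos j). lra.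
Qed.

End PZ.


Lemma V (lam : R) (s t : nat) p q : 0 < lam -> lam ^ t - lam ^ s = 1 ->
  In (p,q) (triads_ab lam (Z.of_nat s) (Z.of_nat t)) -> triad_at_unity lam p q.
Proof.
  intros Hl Heq Hin.
  rewrite !pow_powerRZ in Heq.
  set (a := Z.of_nat s) in *. set (b := Z.of_nat t) in *. clearbody a b.
  assert (Hn : lam <> 0) by lra.
  assert (PA : 0 < powerRZ lam a) by (apply powerRZ_lt; lra).
  assert (PB : 0 < powerRZ lam b) by (apply powerRZ_lt; lra).
  assert (E1 : powerRZ lam (b - a) = powerRZ lam b * / powerRZ lam a).
  { replace (b - a)%Z with (b + - a)%Z by ring. rewrite powerRZ_add by exact Hn.
    rewrite powerRZ_neg'. reflexivity. }
  assert (E2 : powerRZ lam (a - b) = powerRZ lam a * / powerRZ lam b).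
  { replace (a - b)%Z with (a + - b)%Z by ring. rewrite powerRZ_add by exact Hn.
    rewrite powerRZ_neg'. reflexivity. }
  assert (E3 : powerRZ lam (-a) = / powerRZ lam a) by apply powerRZ_neg'.
  assert (E4 : powerRZ lam (-b) = / powerRZ lam b) by apply powerRZ_neg'.
  unfold triads_ab in Hin. cbn [In] in Hin.
  destruct Hin as [H|[H|[H|[H|[H|[H|[]]]]]]]; inversion H; subst p q;
  (split; [eexists; first [left; reflexivity | right; reflexivity] |
   split; [eexists; first [left; reflexivity | right; reflexivity] | ]]);
  rewrite ?E1, ?E2, ?E3, ?E4;
  replace (powerRZ lam b) with (1 + powerRZ lam a) by lra; field; lra.
Qed.

Section LAT.
Variable lam : R.
Hypothesis hl : 1 < lam.

Lemma lat_nz x : in_lattice lam x -> x <> 0.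
Proof. intros [n [->| ->]]; pose proof (pz_pos lam hl n); lra. Qed.

Lemma lat_mul x y : in_lattice lam x -> in_lattice lam y -> in_lattice lam (x * y).
Proof.
  intros [n Hx] [m Hy]. exists (n + m)%Z. rewrite pz_add by exact hl.
  destruct Hx as [-> | ->], Hy as [-> | ->]; [left|right|right|left]; ring.
Qed.

Lemma lat_inv x : in_lattice lam x -> in_lattice lam (/ x).
Proof.
  intros [n Hx]. exists (- n)%Z. rewrite powerRZ_neg'.
  pose proof (pz_pos lam hl n).
  destruct Hx as [-> | ->]; [left; reflexivity | right; field; lra].
Qed.

Lemma adj_sym x y : adjacent lam x y -> adjacent lam y x.
Proof. intros [k [p [q [T [Hx Hy]]]]]. exists k, p, q. auto. Qed.

Lemma Rr_sym x y : clos_refl_trans R (adjacent lam) x y -> clos_refl_trans R (adjacent lam) y x.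
Proof.
  induction 1.
  - apply rt_step, adj_sym; auto.
  - apply rt_refl.
  - eapply rt_trans; eauto.
Qed.

Lemma step_mul x p q : in_lattice lam x -> triad_at_unity lam p q ->
  clos_refl_trans R (adjacent lam) x (x * p).
Proof.
  intros Hx [Hp [Hq Hs]]. apply rt_step.
  exists x, (x * p), (x * q). split.
  - split; [exact Hx|]. split; [apply lat_mul; auto|]. split; [apply lat_mul; auto|].
    replace (x * p + x * q) with (x * (p + q)) by ring. rewrite Hs. ring.
  - split; [left; reflexivity | right; left; reflexivity].
Qed.

Definition M (c : Z) := forall x, in_lattice lam x ->
  clos_refl_trans R (adjacent lam) x (x * powerRZ lam c).

Lemma M0 : M 0.
Proof. intros x Hx. rewrite pz_0, Rmult_1_r. apply rt_refl. Qed.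

Lemma M_add c d : M c -> M d -> M (c + d).
Proof.
  intros Hc Hd x Hx. eapply rt_trans; [apply (Hc x Hx)|].
  replace (x * powerRZ lam (c + d)) with (x * powerRZ lam c * powerRZ lam d)
    by (rewrite pz_add by exact hl; ring).
  apply Hd. apply lat_mul; auto. exists c; left; reflexivity.
Qed.

Lemma M_opp c : M c -> M (- c).
Proof.
  intros Hc x Hx. apply Rr_sym.
  assert (Hy : in_lattice lam (x * powerRZ lam (- c))).
  { apply lat_mul; auto. exists (- c)%Z; left; reflexivity. }
  pose proof (Hc _ Hy) as H.
  replace (x * powerRZ lam (- c) * powerRZ lam c) with x in H; [exact H|].
  rewrite Rmult_assoc, pz_neg by exact hl. ring.
Qed.

Lemma M_nat c (n : nat) : M c -> M (Z.of_nat n * c).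
Proof.
  intros Hc. induction n as [|n IH].
  - exact M0.
  - replace (Z.of_nat (S n) * c)%Z with (Z.of_nat n * c + c)%Z by lia.
    apply M_add; auto.
Qed.

Lemma M_int c k : M c -> M (k * c).
Proof.
  intros Hc. destruct (Z_le_gt_dec 0 k) as [h|h].
  - replace k with (Z.of_nat (Z.to_nat k)) by lia. apply M_nat; auto.
  - replace (k * c)%Z with (- (Z.of_nat (Z.to_nat (- k)) * c))%Z by lia.
    apply M_opp, M_nat; auto.
Qed.

Lemma W (s t : nat) : (s < t)%nat -> lam ^ t - lam ^ s = 1 -> Nat.gcd s t = 1%nat ->
  nondegenerate lam.
Proof.
  intros Hst Heq Hg.
  set (a := Z.of_nat s). set (b := Z.of_nat t).
  assert (T1 : triad_at_unity lam (powerRZ lam b) (- powerRZ lam a)).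
  { apply (V lam s t); [lra|exact Heq|]. unfold triads_ab. cbn [In]. left; reflexivity. }
  assert (T2 : triad_at_unity lam (powerRZ lam (b - a)) (- powerRZ lam (- a))).
  { apply (V lam s t); [lra|exact Heq|]. unfold triads_ab. cbn [In]. right; right; left; reflexivity. }
  assert (Mb : M b). { intros x Hx. eapply step_mul; eauto. }
  assert (Mba : M (b - a)). { intros x Hx. eapply step_mul; eauto. }
  assert (Sg : forall x, in_lattice lam x -> clos_refl_trans R (adjacent lam) x (x * - powerRZ lam a)).
  { intros x Hx. eapply step_mul; [exact Hx|]. destruct T1 as [A [B C]]. split; [exact B|]. split; [exact A|]. lra. }
  assert (M1 : M 1).
  { assert (exists al be : Z, (al * b + be * (b - a) = 1)%Z) as [al [be E]].
    { destruct (Nat.gcd_bezout s t) as [[u [v Huv]]|[u [v Huv]]]; rewrite Hg in Huv.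
      - exists (Z.of_nat u - Z.of_nat v)%Z, (- Z.of_nat u)%Z. unfold a, b. nia.
      - exists (Z.of_nat u - Z.of_nat v)%Z, (Z.of_nat v)%Z. unfold a, b. nia. }
    rewrite <- E. apply M_add; apply M_int; auto. }
  assert (All : forall x, in_lattice lam x -> clos_refl_trans R (adjacent lam) 1 x).
  { intros x [n [-> | ->]].
    - pose proof (M_int 1 n M1 1 ltac:(exists 0%Z; left; reflexivity)) as H.
      rewrite Z.mul_1_r, Rmult_1_l in H. exact H.
    - pose proof (Sg 1 ltac:(exists 0%Z; left; reflexivity)) as H1.
      rewrite Rmult_1_l in H1.
      eapply rt_trans; [exact H1|].
      pose proof (M_int 1 (n - a) M1 (- powerRZ lam a) ltac:(exists a; right; reflexivity)) as H2.
      replace (- powerRZ lam a * powerRZ lam ((n - a) * 1)) with (- powerRZ lam n) in H2; [exact H2|].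
      replace ((n - a) * 1)%Z with (n + - a)%Z by ring. rewrite pz_add by exact hl.
      replace (- powerRZ lam a * (powerRZ lam n * powerRZ lam (- a)))
        with (- powerRZ lam n * (powerRZ lam (- a) * powerRZ lam a)) by ring.
      rewrite pz_neg by exact hl. ring. }
  intros x y Hx Hy. eapply rt_trans; [apply Rr_sym, All, Hx | apply All, Hy].
Qed.
End LAT.


Section INV.
Variable lam : R.
Hypothesis hl : 1 < lam.
Variable d : nat.

Definition Sd (x : R) := exists n, (Z.of_nat d | n)%Z /\ (x = powerRZ lam n \/ x = - powerRZ lam n).

Lemma Sd_mul x y : Sd x -> Sd y -> Sd (x * y).
Proof.
  intros [n [Dn Hx]] [m [Dm Hy]]. exists (n + m)%Z. split; [apply Z.divide_add_r; auto|].
  rewrite pz_add by exact hl.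
  destruct Hx as [-> | ->], Hy as [-> | ->]; [left|right|right|left]; ring.
Qed.

Lemma Sd_inv x : Sd x -> Sd (/ x).
Proof.
  intros [n [Dn Hx]]. exists (- n)%Z. split; [apply Z.divide_opp_r; auto|].
  rewrite powerRZ_neg'. pose proof (pz_pos lam hl n).
  destruct Hx as [-> | ->]; [left; reflexivity | right; field; lra].
Qed.

Lemma comp (s t : nat) u v : Nat.divide d s -> Nat.divide d t ->
  In (u,v) (triads_ab lam (Z.of_nat s) (Z.of_nat t)) -> Sd u /\ Sd v.
Proof.
  intros [k1 E1] [k2 E2] Hin.
  assert (Da : (Z.of_nat d | Z.of_nat s)%Z) by (exists (Z.of_nat k1); lia).
  assert (Db : (Z.of_nat d | Z.of_nat t)%Z) by (exists (Z.of_nat k2); lia).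
  set (a := Z.of_nat s) in *. set (b := Z.of_nat t) in *. clearbody a b.
  unfold triads_ab in Hin. cbn [In] in Hin.
  destruct Hin as [H|[H|[H|[H|[H|[H|[]]]]]]]; inversion H; subst u v;
  split; eexists; (split; [|first [left; reflexivity | right; reflexivity]]);
  first [ exact Da | exact Db | apply Z.divide_sub_r; auto | apply Z.divide_opp_r; auto ].
Qed.

Hypothesis Hd : forall s t : nat, (s < t)%nat -> lam ^ t - lam ^ s = 1 ->
  Nat.divide d s /\ Nat.divide d t.

Lemma adj_pres x y : adjacent lam x y -> Sd x -> Sd y.
Proof.
  intros [k [p [q [[Lk [Lp [Lq Hk]]] [Hx Hy]]]]] Sx.
  assert (kz : k <> 0) by (apply (lat_nz lam hl); auto).
  assert (Lu : in_lattice lam (p * / k)) by (apply lat_mul, lat_inv; auto).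
  assert (Lv : in_lattice lam (q * / k)) by (apply lat_mul, lat_inv; auto).
  assert (uz : p * / k <> 0) by (apply (lat_nz lam hl); auto).
  assert (vz : q * / k <> 0) by (apply (lat_nz lam hl); auto).
  assert (Suv : p * / k + q * / k = 1) by (rewrite Hk; field; lra).
  destruct (U lam hl _ _ Lu Lv Suv) as [s [t [Hst [Heq Hin]]]].
  destruct (Hd s t Hst Heq) as [D1 D2].
  destruct (comp s t _ _ D1 D2 Hin) as [Su Sv].
  assert (Ep : p = k * (p * / k)) by (field; exact kz).
  assert (Eq : q = k * (q * / k)) by (field; exact kz).
  assert (Sk : Sd k).
  { destruct Hx as [-> | [-> | ->]]; [exact Sx| |].
    - assert (pz : p <> 0) by (apply (lat_nz lam hl); auto).
      replace k with (p * / (p * / k)) by (field; split; assumption).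
      apply Sd_mul; [exact Sx| apply Sd_inv; exact Su].
    - assert (qz : q <> 0) by (apply (lat_nz lam hl); auto).
      replace k with (q * / (q * / k)) by (field; split; assumption).
      apply Sd_mul; [exact Sx| apply Sd_inv; exact Sv]. }
  destruct Hy as [-> | [-> | ->]]; [exact Sk| |].
  - rewrite Ep. apply Sd_mul; auto.
  - rewrite Eq. apply Sd_mul; auto.
Qed.

Lemma rt_pres x y : clos_refl_trans R (adjacent lam) x y -> Sd x -> Sd y.
Proof.
  induction 1; auto. apply adj_pres; auto.
Qed.

Lemma not_nondeg : (d <> 1)%nat -> ~ nondegenerate lam.
Proof.
  intros Hd1 ND.
  assert (L1 : in_lattice lam 1) by (exists 0%Z; left; reflexivity).
  assert (Ll : in_lattice lam lam) by (exists 1%Z; left; simpl; ring).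
  pose proof (ND 1 lam L1 Ll) as H.
  assert (S1 : Sd 1) by (exists 0%Z; split; [apply Z.divide_0_r | left; reflexivity]).
  destruct (rt_pres _ _ H S1) as [n [Dn [E|E]]].
  - assert (powerRZ lam 1 = powerRZ lam n) by (rewrite <- E; simpl; ring).
    apply (pz_inj lam hl) in H0. subst n.
    apply Z.divide_1_r_nonneg in Dn; [lia|lia].
  - pose proof (pz_pos lam hl n). lra.
Qed.
End INV.


Lemma L2eq : triads_ab 2 (Z.of_nat 0) (Z.of_nat 1) =
  [(2,-1);(-1,2);(2,-1);(-1,2);(1/2,1/2);(1/2,1/2)].
Proof.
  unfold triads_ab. simpl.
  repeat f_equal; field.
Qed.

Lemma Lpl s : triads_plastic s = triads_ab s (Z.of_nat 1) (Z.of_nat 3) ++ triads_ab s (Z.of_nat 4) (Z.of_nat 5).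
Proof. reflexivity. Qed.

Lemma cube_root x : 0 < x -> Rpower x (1/3) ^ 3 = x.
Proof.
  intros Hx. rewrite <- Rpower_pow by (unfold Rpower; apply exp_pos).
  rewrite Rpower_mult. replace (1/3 * INR 3) with 1 by (simpl; field).
  apply Rpower_1; exact Hx.
Qed.

Lemma plastic_facts : plastic ^ 3 = plastic + 1 /\ 1 < plastic.
Proof.
  assert (Q0 : 0 <= sqrt 69) by apply sqrt_pos.
  assert (Q1 : sqrt 69 * sqrt 69 = 69) by (apply sqrt_sqrt; lra).
  assert (Q2 : sqrt 69 < 9) by nra.
  set (A := 9 + sqrt 69). set (B := 9 - sqrt 69).
  assert (HA : 0 < A) by (unfold A; lra). assert (HB : 0 < B) by (unfold B; lra).
  set (u := Rpower A (1/3)). set (v := Rpower B (1/3)). set (c := Rpower 18 (1/3)).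
  assert (Hu : 0 < u) by (unfold u, Rpower; apply exp_pos).
  assert (Hv : 0 < v) by (unfold v, Rpower; apply exp_pos).
  assert (Hc : 0 < c) by (unfold c, Rpower; apply exp_pos).
  assert (U3 : u ^ 3 = A) by (apply cube_root; exact HA).
  assert (V3 : v ^ 3 = B) by (apply cube_root; exact HB).
  assert (C3 : c ^ 3 = 18) by (apply cube_root; lra).
  assert (UV : u * v * c = 6).
  { unfold u, v, c. rewrite Rpower_mult_distr by lra. rewrite Rpower_mult_distr by nra.
    replace (A * B * 18) with (Rpower 6 (INR 3)).
    - rewrite Rpower_mult. replace (INR 3 * (1/3)) with 1 by (simpl; field). apply Rpower_1; lra.
    - rewrite Rpower_pow by lra. unfold A, B. nra. }
  assert (Hx : plastic = (u + v) / c) by reflexivity.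
  assert (E : plastic ^ 3 = plastic + 1).
  { rewrite Hx. unfold Rdiv. rewrite Rpow_mult_distr, pow_inv, C3.
    replace ((u + v) ^ 3) with (u ^ 3 + v ^ 3 + 3 * (u * v) * (u + v)) by ring.
    rewrite U3, V3. replace (u * v) with (u * v * c / c) by (field; lra). rewrite UV.
    unfold A, B. field. lra. }
  split; [exact E|].
  assert (0 < plastic) by (rewrite Hx; apply Rdiv_lt_0_compat; lra).
  destruct (Rlt_le_dec 1 plastic) as [h|h]; [exact h|].
  exfalso. assert (plastic ^ 3 <= plastic) by (simpl; nra). lra.
Qed.


Lemma uniqC (lam : R) (s t s' t' : nat) : 21/20 <= lam ->
  (s < t)%nat -> lam ^ t - lam ^ s = 1 ->
  (s' < t')%nat -> lam ^ t' - lam ^ s' = 1 -> Cb s t s' t' = true.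
Proof.
  intros Hl H1 H2 H3 H4. apply (sep lam); auto; eapply F0; eauto.
Qed.

Lemma root_uniq (s t : nat) x y : (s < t)%nat -> 1 <= x -> 1 <= y ->
  x ^ t - x ^ s = 1 -> y ^ t - y ^ s = 1 -> x = y.
Proof.
  intros H Hx Hy Ex Ey.
  destruct (Rtotal_order x y) as [h|[h|h]]; auto; exfalso.
  - pose proof (mono s t x y H Hx h). unfold fr in H0. lra.
  - pose proof (mono s t y x H Hy h). unfold fr in H0. lra.
Qed.

Theorem theorem1 (lam : R) (hlam : 105 / 100 <= lam) :
  (nondegenerate lam <-> (lam = 2 \/ lam = plastic \/ case3 lam)) /\
  (lam = 2 -> forall p q, triad_at_unity lam p q <->
      In (p, q) [ (2, -1); (-1, 2); (1/2, 1/2) ]) /\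
  (lam = plastic -> forall p q, triad_at_unity lam p q <->
      In (p, q) (triads_plastic plastic)) /\
  (forall a b : nat, case3_pair a b -> lam ^ b - lam ^ a = 1 ->
     forall p q, triad_at_unity lam p q <->
       In (p, q) (triads_ab lam (Z.of_nat a) (Z.of_nat b))).
Proof.
  assert (hl : 1 < lam) by lra.
  assert (h2 : 21/20 <= lam) by lra.
  destruct plastic_facts as [Pc P1].
  assert (P13 : plastic ^ 3 - plastic ^ 1 = 1) by (rewrite Pc; simpl; ring).
  assert (P45 : plastic ^ 5 - plastic ^ 4 = 1).
  { assert (H : plastic ^ 5 - plastic ^ 4 - 1 = (plastic ^ 3 - plastic - 1) * (plastic ^ 2 - plastic + 1)) by ring.
    rewrite Pc in H. ring_simplify in H. lra. }
  split; [|split; [|split]].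
  - split.
    + intros ND.
      destruct (classic (exists s t, (s < t)%nat /\ lam ^ t - lam ^ s = 1)) as [[s [t [Hst Heq]]]|Hno].
      * destruct (Nat.eq_dec (Nat.gcd s t) 1) as [Hg|Hg].
        -- pose proof (F0 lam s t h2 Hst Heq) as Ht.
           destruct (classic ((s = 1 /\ t = 3) \/ (s = 4 /\ t = 5))%nat) as [[[-> ->]|[-> ->]]|Hn].
           ++ right; left. apply (root_uniq 1 3 lam plastic); [lia|lra|lra|exact Heq|exact P13].
           ++ right; left. apply (root_uniq 4 5 lam plastic); [lia|lra|lra|exact Heq|exact P45].
           ++ right; right; exists s, t; split; [|exact Heq].
              split; [exact Hst|]. split; [exact Ht|]. split; [exact Hg|].
              split; intro HH; inversion HH; subst; apply Hn; auto.
        -- exfalso. apply (not_nondeg lam hl (Nat.gcd s t)); [|exact Hg|exact ND].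
           intros s' t' Hst' Heq'.
           pose proof (uniqC lam s t s' t' h2 Hst Heq Hst' Heq') as C.
           apply Cb_spec in C as [Cg _]. rewrite Cg.
           split; [apply Nat.gcd_divide_l | apply Nat.gcd_divide_r].
      * exfalso. apply (not_nondeg lam hl 2); [|lia|exact ND].
        intros s t Hst Heq. exfalso. apply Hno. exists s, t; auto.
    + intros [->|[->|[a [b [[H1 [H2 [H3 _]]] Heq]]]]].
      * apply (W 2 ltac:(lra) 0 1); [lia|simpl; lra|reflexivity].
      * apply (W plastic P1 1 3); [lia|exact P13|reflexivity].
      * apply (W lam hl a b); auto.
  - intros -> p q. split.
    + intros [Lp [Lq S]].
      destruct (U 2 ltac:(lra) p q Lp Lq S) as [s [t [Hst [Heq Hin]]]].
      pose proof (uniqC 2 s t 0 1 h2 Hst Heq ltac:(lia) ltac:(simpl; lra)) as C.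
      apply Cb_spec in C as [Cg C]. specialize (C Cg).
      destruct C as [[-> ->]|[_ C]]; [|discriminate].
      rewrite L2eq in Hin. simpl in Hin. simpl. tauto.
    + intros Hin. apply (V 2 0 1); [lra|simpl; lra|].
      rewrite L2eq. simpl in Hin. simpl. tauto.
  - intros -> p q. rewrite Lpl, in_app_iff. split.
    + intros [Lp [Lq S]].
      destruct (U plastic P1 p q Lp Lq S) as [s [t [Hst [Heq Hin]]]].
      pose proof (uniqC plastic s t 1 3 h2 Hst Heq ltac:(lia) P13) as C.
      apply Cb_spec in C as [Cg C]. specialize (C Cg).
      destruct C as [[-> ->]|[C _]]; [left; exact Hin|].
      apply isPl_spec in C as [[-> ->]|[-> ->]]; [left|right]; exact Hin.
    + intros [Hin|Hin]; [apply (V plastic 1 3)|apply (V plastic 4 5)]; auto; lra.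
  - intros a b [H1 [H2 [H3 [H4 H5]]]] Heq p q. split.
    + intros [Lp [Lq S]].
      destruct (U lam hl p q Lp Lq S) as [s [t [Hst [Heq' Hin]]]].
      pose proof (uniqC lam s t a b h2 Hst Heq' H1 Heq) as C.
      apply Cb_spec in C as [Cg C]. rewrite Cg in C. specialize (C H3).
      destruct C as [[-> ->]|[_ C]]; [exact Hin|].
      apply isPl_spec in C as [[-> ->]|[-> ->]]; contradiction.
    + intros Hin. apply (V lam a b); auto; lra.
Qed.
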